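(* Let $t$ be the total number of attribute values. The Depth-First Search Sampling algorithm (stack initialized with a matching starting context $C_V$; repeatedly take the top context $C$, mark it visited, compute the matching unvisited contexts connected to $C$, pop if there are none, otherwise push the one selected by $\mathrm{Exp}^{\epsilon_1}_u$; stop after $n$ contexts are visited or the stack is empty; output $\mathrm{Exp}^{\epsilon_1}_u$ applied to the visited contexts) has computational complexity $\mathcal O(t)$.
   Context: Dataset $D$ over categorical attributes $A_1,\dots,A_m$ with domain sizes $|A_i|$, $t=\sum_i|A_i|$. A context is a binary vector of length $t$ selecting a subset of values per attribute; $D_C$ is its population in $D$. Two contexts are connected if their Hamming distance is $1$ (each context has $t$ connected contexts). A context $C$ is matching if $f_M(D_C,V)=\mathrm{true}$ for a deterministic outlier verification $f_M$ for record $V$ w.r.t. metric $M$. $\mathrm{Exp}^{\epsilon}_u$ is the Exponential mechanism selecting from a set with probability proportional to $\exp(\epsilon u/(2\Delta u))$. The number of samples $n$ is treated as a constant; complexity counts outlier-verification calls and mechanism evaluations. *)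

(* Defs.v *)
From mathcomp Require Import all_boot all_order.
Set Implicit Arguments. Unset Strict Implicit. Unset Printing Implicit Defensive.

(* Total number of attribute values: t = sum_i |A_i|, for m attributes whose
   domain sizes are given by [sz]. *)
Definition total_values (m : nat) (sz : 'I_m -> nat) : nat := \sum_(i < m) sz i.

Definition ctx (t : nat) := {ffun 'I_t -> bool}.

Definition hamming (t : nat) (C C' : ctx t) : nat := #|[set i | C i != C' i]|.

Definition connected (t : nat) (C C' : ctx t) : bool := hamming C C' == 1.

Definition neighbors (t : nat) (C : ctx t) : seq (ctx t) :=
  [seq C' <- enum {ffun 'I_t -> bool} | connected C C'].

(* State of the DFS sampling algorithm:
   stack, visited contexts, accumulated cost, number of mechanism calls made
   so far (used to index the random outcomes of the Exponential mechanism). *)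
Record dfs_state (t : nat) := DfsState {
  st_stack : seq (ctx t);
  st_visited : seq (ctx t);
  st_cost : nat;
  st_draws : nat }.

(* One iteration of the loop.  [fM C] is the outlier verification
   f_M(D_C, V) (one call = one unit of cost); [pick k S] is the outcome of the
   k-th evaluation of the Exponential mechanism Exp^{eps1}_u on candidate set S
   (one evaluation = one unit of cost). *)
Definition dfs_step (t n : nat) (fM : ctx t -> bool)
  (pick : nat -> seq (ctx t) -> ctx t) (st : dfs_state t) : option (dfs_state t) :=
  match st_stack st with
  | [::] => None
  | C :: rest =>
    if n <= size (st_visited st) then None else
    let vis := if C \in st_visited st then st_visited st
               else rcons (st_visited st) C in
    let nb := neighbors C in
    (* every connected context is examined by one call to f_M (conservative) *)
    let cand := [seq C' <- nb | (C' \notin vis) && fM C'] in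
    let cost := st_cost st + size nb in
    match cand with
    | [::] => Some (DfsState rest vis cost (st_draws st))
    | _ :: _ =>
      Some (DfsState (pick (st_draws st) cand :: st_stack st) vis cost.+1
                     (st_draws st).+1)
    end
  end.

Fixpoint dfs_run (t n : nat) (fM : ctx t -> bool)
  (pick : nat -> seq (ctx t) -> ctx t) (fuel : nat) (st : dfs_state t)
  : option (ctx t * nat) :=
  match dfs_step n fM pick st with
  | None => Some (pick (st_draws st) (st_visited st), (st_cost st).+1)
  | Some st' =>
    match fuel with
    | 0 => None
    | fuel'.+1 => dfs_run n fM pick fuel' st'
    end
  end.

Definition dfs_init (t : nat) (CV : ctx t) : dfs_state t := DfsState [:: CV] [::] 0 0.

(* Main.v *)
Require Import Defs.
From mathcomp Require Import all_boot all_order.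
From mathcomp Require Import zify.
Set Implicit Arguments. Unset Strict Implicit.

Definition flipc (t : nat) (C : ctx t) (i : 'I_t) : ctx t :=
  [ffun j => if j == i then ~~ C j else C j].

Lemma size_neighbors (t : nat) (C : ctx t) : size (neighbors C) <= t.
Proof.
apply: (@leq_trans (size [seq flipc C i | i <- enum 'I_t])); last by rewrite size_map size_enum_ord.
apply: uniq_leq_size; first by rewrite filter_uniq // enum_uniq.
move=> C'; rewrite mem_filter => /andP [/cards1P [i Hi] _].
apply/mapP; exists i; first by rewrite mem_enum.
apply/ffunP => j; rewrite ffunE.
have := congr1 (fun A : {set 'I_t} => j \in A) Hi; rewrite !inE /=.
case: (j =P i) => [-> |] /= H.
  by case: (C i) (C' i) H => [] [].
by move=> /negbFE /eqP ->.
Qed.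

Definition Pot (t n : nat) (st : dfs_state t) : nat :=
  2 * (n - size (st_visited st)) + size (st_stack st) +
  2 * (match st_stack st with C :: _ => C \in st_visited st | [::] => true end).

Definition Inv (t : nat) (st : dfs_state t) : bool :=
  all (fun x => x \in st_visited st) (behead (st_stack st)).

Lemma step_ok (t n : nat) fM pick (st st' : dfs_state t) :
  (forall k S, S != [::] -> pick k S \in S) ->
  Inv st -> dfs_step n fM pick st = Some st' ->
  [/\ Inv st', Pot n st' < Pot n st & st_cost st' <= st_cost st + t + 1].
Proof.
move=> Hpick; case: st => [[|C rest] vis cost dr]; rewrite /dfs_step /Inv /Pot /= //.
move=> Hrest.
have [//|Hv] := leqP n (size vis).
have Hnb := size_neighbors C.
set vis' := (if C \in vis then vis else rcons vis C).
have Hsub : forall x, x \in vis -> x \in vis'.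
  by move=> x; rewrite /vis'; case: ifP => // _; rewrite mem_rcons inE => ->; rewrite orbT.
have HC : C \in vis' by rewrite /vis'; case: ifP => // _; rewrite mem_rcons inE eqxx.
have Hrest' : all (fun x => x \in vis') rest.
  by apply/allP => x /(allP Hrest) /Hsub.
have Hsz : size vis' = size vis + (C \notin vis).
  by rewrite /vis'; case: ifP => _ /=; rewrite ?size_rcons ?addn0 ?addn1.
case Hc: [seq C' <- neighbors C | (C' \notin vis') && fM C'] => [|x l] [<-] /=.
- split.
  + by apply/allP => y /mem_behead /(allP Hrest').
  + case E: rest Hrest' => [|y r] /=.
      by case: (C \in vis) Hsz => /=; lia.
    case/andP => -> _.
    by case: (C \in vis) Hsz => /=; lia.
  + lia.
- have Hp : pick dr (x :: l) \in (x :: l) by apply: Hpick.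
  move: Hp; rewrite -Hc mem_filter => /andP [/andP [Hnv _] _].
  split.
  + by rewrite /= HC Hrest'.
  + rewrite (negbTE Hnv) /=.
    by case: (C \in vis) Hsz => /=; lia.
  + lia.
Qed.

Lemma run_ok (t n : nat) fM pick :
  (forall k S, S != [::] -> pick k S \in S) ->
  forall k (st : dfs_state t), Inv st -> Pot n st <= k ->
  exists out cost, dfs_run n fM pick k st = Some (out, cost) /\
    cost <= st_cost st + Pot n st * t.+1 + 1.
Proof.
move=> Hpick; elim=> [|k IH] st Hi Hk /=.
- case Hs: (dfs_step n fM pick st) => [st'|].
    by have [_ Hlt _] := step_ok Hpick Hi Hs; lia.
  by exists (pick (st_draws st) (st_visited st)), (st_cost st).+1; split => //; lia.
- case Hs: (dfs_step n fM pick st) => [st'|].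
    have [Hi' Hlt Hc] := step_ok Hpick Hi Hs.
    have [out [cost [-> Hcost]]] := IH st' Hi' (ltac:(lia)).
    exists out, cost; split => //.
    have : Pot n st' * t.+1 + t.+1 <= Pot n st * t.+1.
      by rewrite addnC -mulSn leq_mul2r Hlt orbT.
    lia.
  by exists (pick (st_draws st) (st_visited st)), (st_cost st).+1; split => //; lia.
Qed.

Theorem theorem9 (n : nat) :
  exists c : nat,
  forall (m : nat) (sz : 'I_m -> nat)
         (fM : ctx (total_values sz) -> bool)
         (CV : ctx (total_values sz))
         (pick : nat -> seq (ctx (total_values sz)) -> ctx (total_values sz)),
    fM CV ->
    (forall k S, S != [::] -> pick k S \in S) ->
    exists (fuel : nat) (out : ctx (total_values sz)) (cost : nat),
      dfs_run n fM pick fuel (dfs_init CV) = Some (out, cost) /\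
      cost <= c * total_values sz + c.
Proof.
exists (2 * n + 2) => m sz fM CV pick _ Hpick.
have [out [cost [H Hc]]] := run_ok fM Hpick (isT : Inv (dfs_init CV)) (leqnn (Pot n (dfs_init CV))).
exists (Pot n (dfs_init CV)), out, cost; split => //.
move: Hc; rewrite /Pot /= subn0.
set T := total_values sz.
simpl; nia.
Qed.
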